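(* For every $M_q=\begin{pmatrix}\mathcal{R}(q) & \mathcal{V}(q)\\ \mathcal{S}(q) & \mathcal{U}(q)\end{pmatrix}\in G_q$, the polynomial $q^2-q+1$ divides $\mathcal{V}(q)\,q^4+(\mathcal{U}(q)-\mathcal{R}(q))\,q^2-\mathcal{S}(q)$ in $\mathbb{Z}[q,q^{-1}]$.
   Context: Let $q$ be a formal parameter and let $R_q=\begin{pmatrix} q & 1\\ 0 & 1\end{pmatrix}$, $S_q=\begin{pmatrix} 0 & -q^{-1}\\ 1 & 0\end{pmatrix}\in \mathrm{GL}(2,\mathbb{Z}[q,q^{-1}])$. Let $G_q=\langle R_q,S_q\rangle$ be the group they generate. *)

(* Defs.v *)
(* Z[q,q^{-1}] is realized as the subring of Laurent
   polynomials inside the fraction field of Z[q]. *)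
From HB Require Import structures.
From mathcomp Require Import all_boot all_order all_algebra fraction.
Set Implicit Arguments. Unset Strict Implicit. Unset Printing Implicit Defensive.
Import Order.TTheory GRing.Theory Num.Theory.
Local Open Scope ring_scope.

Definition F := {fraction {poly int}}.

Definition toF (p : {poly int}) : F := @FracField.tofrac _ p.

Definition qF : F := toF 'X.

Definition laurent (f : F) : Prop :=
  exists (p : {poly int}) (n : nat), f = toF p / qF ^+ n.

Definition mx2 (a b c d : F) : 'M[F]_2 :=
  \matrix_(i < 2, j < 2)
    if i == 0 then (if j == 0 then a else b) else (if j == 0 then c else d).

Definition Rq : 'M[F]_2 := mx2 qF 1 0 1.
Definition Sq : 'M[F]_2 := mx2 0 (- qF^-1) 1 0.

Inductive in_Gq : 'M[F]_2 -> Prop :=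
  | Gq_one : in_Gq 1%:M
  | Gq_R M : in_Gq M -> in_Gq (M *m Rq)
  | Gq_Rinv M : in_Gq M -> in_Gq (M *m invmx Rq)
  | Gq_S M : in_Gq M -> in_Gq (M *m Sq)
  | Gq_Sinv M : in_Gq M -> in_Gq (M *m invmx Sq).

Definition laurent_dvd (a b : F) : Prop :=
  exists c : F, laurent c /\ b = a * c.

(* Main.v *)
Require Import Defs.
From HB Require Import structures.
From mathcomp Require Import all_boot all_order all_algebra fraction.
From mathcomp Require Import ring.
Import Order.TTheory GRing.Theory Num.Theory.
Local Open Scope ring_scope.

Lemma qF_neq0 : qF != 0.
Proof. by rewrite /qF /toF tofrac_eq0 polyX_eq0. Qed.

Lemma qFX_neq0 n : qF ^+ n != 0.
Proof. exact: expf_neq0 qF_neq0. Qed.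

Lemma laurent_toF p : laurent (toF p).
Proof. by exists p, 0%N; rewrite expr0 divr1. Qed.

Lemma laurent0 : laurent 0.
Proof. by have := laurent_toF 0; rewrite /toF tofrac0. Qed.

Lemma laurent1 : laurent 1.
Proof. by have := laurent_toF 1; rewrite /toF tofrac1. Qed.

Lemma laurentq : laurent qF.
Proof. exact: laurent_toF. Qed.

Lemma laurentqV : laurent qF^-1.
Proof. exists 1, 1%N; by rewrite /toF tofrac1 expr1 div1r. Qed.

Lemma addfrac (K : fieldType) (x P R : K) n m : x != 0 ->
  P / x ^+ n + R / x ^+ m = (P * x ^+ m + R * x ^+ n) / x ^+ (n + m).
Proof. move=> H; rewrite exprD; field; by rewrite !expf_neq0. Qed.
Lemma mulfrac (K : fieldType) (x P R : K) n m : x != 0 ->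
  (P / x ^+ n) * (R / x ^+ m) = (P * R) / x ^+ (n + m).
Proof. move=> H; rewrite exprD; field; by rewrite !expf_neq0. Qed.

Lemma laurentD f g : laurent f -> laurent g -> laurent (f + g).
Proof.
move=> [p [n ->]] [r [m ->]].
exists (p * 'X ^+ m + r * 'X ^+ n), (n + m)%N.
have := qF_neq0; rewrite /qF /toF tofracD !tofracM !tofracXn.
by move/addfrac->.
Qed.

Lemma laurentM f g : laurent f -> laurent g -> laurent (f * g).
Proof.
move=> [p [n ->]] [r [m ->]].
exists (p * r), (n + m)%N.
have := qF_neq0; rewrite /qF /toF !tofracM.
by move/mulfrac->.
Qed.
Lemma laurentN f : laurent f -> laurent (- f).
Proof.
move=> [p [n ->]]; exists (- p), n.
by rewrite /toF tofracN mulNr.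
Qed.

Definition Phi : F := qF ^+ 2 - qF + 1.

Definition Inv (M : 'M[F]_2) : Prop :=
  [/\ laurent (M 0 0), laurent (M 0 1), laurent (M 1 0), laurent (M 1 1) &
  exists l w1 w2, [/\ laurent l, laurent w1, laurent w2,
     M 0 0 = M 0 1 * qF ^+ 2 + l - Phi * w1 &
     M 1 0 = M 1 1 * qF ^+ 2 - l * qF ^+ 2 - Phi * w2]].

Lemma mulmx_mx2 (M : 'M[F]_2) a b c d :
  M *m mx2 a b c d =
  mx2 (M 0 0 * a + M 0 1 * c) (M 0 0 * b + M 0 1 * d)
      (M 1 0 * a + M 1 1 * c) (M 1 0 * b + M 1 1 * d).
Proof.
apply/matrixP=> i j; rewrite /mx2 !mxE !big_ord_recr big_ord0 /= add0r !mxE /=.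
case: i => [[|[|//]] ?]; case: j => [[|[|//]] ?] /=.
all: by congr (M _ _ * _ + M _ _ * _); apply/val_inj.
Qed.

Lemma mx2E a b c d : (mx2 a b c d 0 0 = a) * (mx2 a b c d 0 1 = b)
  * (mx2 a b c d 1 0 = c) * (mx2 a b c d 1 1 = d).
Proof. by rewrite /mx2 !mxE. Qed.

Ltac lau := repeat first [ assumption | exact: laurent0 | exact: laurent1 | exact: laurentq
  | exact: laurentqV | apply: laurentN | apply: laurentD | apply: laurentM ].

Lemma step M a b c d :
  laurent a -> laurent b -> laurent c -> laurent d ->
  (exists mu v1 v2, [/\ laurent mu, laurent v1, laurent v2,
     a = b * qF ^+ 2 + mu - Phi * v1 &
     c = d * qF ^+ 2 - mu * qF ^+ 2 - Phi * v2]) ->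
  Inv M -> Inv (M *m mx2 a b c d).
Proof.
move=> La Lb Lc Ld [mu [v1 [v2 [Lmu Lv1 Lv2 Ea Ec]]]].
case=> L00 L01 L10 L11 [l [w1 [w2 [Ll Lw1 Lw2 E0 E1]]]].
rewrite /Inv mulmx_mx2 !mx2E.
split; [lau|lau|lau|lau|].
exists (mu * l), (mu * w1 + M 0 0 * v1 + M 0 1 * v2),
  (mu * w2 + M 1 0 * v1 + M 1 1 * v2).
split; [lau|lau|lau| |].
- rewrite Ea Ec E0; ring.
- rewrite Ea Ec E1; ring.
Qed.

Lemma inv_eq (A B : 'M[F]_2) : A *m B = 1%:M -> invmx A = B.
Proof.
move=> H; have [uA _] := mulmx1_unit H.
by rewrite -(mulKmx uA B) H mulmx1.
Qed.

Lemma Rq_inv : invmx Rq = mx2 qF^-1 (- qF^-1) 0 1.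
Proof.
apply: inv_eq; rewrite /Rq mulmx_mx2 !mx2E.
have H := qF_neq0.
apply/matrixP=> i j; rewrite /mx2 !mxE.
case: i => [[|[|//]] ?]; case: j => [[|[|//]] ?] /=;
 rewrite ?mulrN ?mulfV // ?mul0r ?mulr0 ?mul1r ?mulr1 ?addr0 ?add0r ?addNr ?oppr0 ?add0r //.
Qed.

Lemma Sq_inv : invmx Sq = mx2 0 1 (- qF) 0.
Proof.
apply: inv_eq; rewrite /Sq mulmx_mx2 !mx2E.
have H := qF_neq0.
apply/matrixP=> i j; rewrite /mx2 !mxE.
case: i => [[|[|//]] ?]; case: j => [[|[|//]] ?] /=;
 rewrite ?mulrN ?mulNr ?opprK ?mulVf // ?mul0r ?mulr0 ?mul1r ?mulr1 ?addr0 ?add0r ?addNr ?oppr0 ?add0r //.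
Qed.

Lemma aux1' (K : fieldType) (x : K) : x != 0 ->
  x^-1 = - x^-1 * x ^+ 2 + 1 - (x ^+ 2 - x + 1) * (- x^-1).
Proof. move=> H; field; exact H. Qed.
Lemma aux2' (K : fieldType) (x : K) : x != 0 ->
  0 = - x^-1 * x ^+ 2 + x - (x ^+ 2 - x + 1) * 0.
Proof. move=> H; field; exact H. Qed.
Definition aux1 := @aux1' _ _ qF_neq0.
Definition aux2 := @aux2' _ _ qF_neq0.

Lemma Inv_all M : in_Gq M -> Inv M.
Proof.
have H := qF_neq0.
elim=> {M} [|M _ IH|M _ IH|M _ IH|M _ IH].
- split; rewrite ?mxE /=; [lau|lau|lau|lau|].
  exists 1, 0, 0; split; rewrite ?mxE /=; [lau|lau|lau| |]; rewrite /Phi; ring.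
- rewrite /Rq; apply: step => //; [lau|lau|lau|lau|].
  exists 1, 1, 0; split; [lau|lau|lau| |]; rewrite /Phi; ring.
- rewrite Rq_inv; apply: step => //; [lau|lau|lau|lau|].
  exists 1, (- qF^-1), 0; split; [lau|lau|lau| |]; rewrite /Phi; [exact: aux1 | ring].
- rewrite /Sq; apply: step => //; [lau|lau|lau|lau|].
  exists qF, 0, (- (qF + 1)); split; [lau|lau|lau| |]; rewrite /Phi; [exact: aux2 | ring].
- rewrite Sq_inv; apply: step => //; [lau|lau|lau|lau|].
  exists (- qF ^+ 2), 0, (qF * (qF + 1)); split; [lau|lau|lau| |]; rewrite /Phi; ring.
Qed.

Theorem corollary5p1 (M : 'M[F]_2) :
  in_Gq M ->
  laurent_dvd (qF ^+ 2 - qF + 1)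
    (M 0 1 * qF ^+ 4 + (M 1 1 - M 0 0) * qF ^+ 2 - M 1 0).
Proof.
move/Inv_all=> [_ _ _ _ [l [w1 [w2 [_ Lw1 Lw2 E0 E1]]]]].
exists (w1 * qF ^+ 2 + w2); split; first by lau.
rewrite E0 E1 /Phi; ring.
Qed.
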